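(* Let $n\ge1$, $\mathfrak g=sl(n+1,\mathbb C)$, $a\in\mathbb C$, $m(a)=-\tfrac12(a+n+1)$, and let $\rho_a$ be the representation of $\mathfrak g$ on $\mathcal P=\mathbb C[z_1,\dots,z_n]$ given, for $f\in\mathcal P$, $1\le k\le n$, $1\le i\ne j\le n$, by $\rho_a(H_k)f=m(a)f-z_k\partial_{z_k}f-\sum_{j}z_j\partial_{z_j}f$, $\rho_a(E_{1,k+1})f=-m(a)z_kf+z_k\sum_jz_j\partial_{z_j}f$, $\rho_a(E_{k+1,1})f=-\partial_{z_k}f$, $\rho_a(E_{i+1,j+1})f=-z_j\partial_{z_i}f$. Assume $\mathcal Q\neq(0)$ is a finite-dimensional subspace of $\mathcal P$ invariant under $\rho_a(X)$ for all $X\in\mathfrak g$. Then $m(a)$ is a non-negative integer, $\mathcal Q=\mathcal P_{m(a)}$, and the restriction of $\rho_a$ to $\mathcal Q$ coincides with $d\pi_{m(a)}$.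
   Context: $E_{ij}$ is the $(n+1)\times(n+1)$ matrix with $1$ in entry $(i,j)$ and $0$ elsewhere; $H_k=E_{k+1,k+1}-E_{11}$; the $H_k$ and $E_{ij}$ ($i\ne j$) form a basis of $\mathfrak g$. (Equivalently, $\rho_a(X)=W(i\tilde X+\tfrac12a\varphi_1(X))$ via the Weyl correspondence, but the formulas above determine $\rho_a$.) For an integer $m\ge0$, $\mathcal P_m$ is the space of complex polynomials on $\mathbb C^n$ of degree $\le m$, and $d\pi_m$ is the representation of $\mathfrak g$ on $\mathcal P_m$ given by $d\pi_m(H_k)f=mf-z_k\partial_{z_k}f-\sum_jz_j\partial_{z_j}f$, $d\pi_m(E_{1,k+1})f=-mz_kf+z_k\sum_jz_j\partial_{z_j}f$, $d\pi_m(E_{k+1,1})f=-\partial_{z_k}f$, $d\pi_m(E_{i+1,j+1})f=-z_j\partial_{z_i}f$ (this is the complexified differential of the representation $\pi_m$ of $SU(n+1)$ on $\mathcal P_m$, $(\pi_m(g)f)(z)=(bz^t+a)^mf(g^{-1}\cdot z)$ where $g^{-1}=\begin{pmatrix}a&b\\c&d\end{pmatrix}$ and $g\cdot z=(a+bz^t)^{-1}(c+dz^t)^t$). *)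

(* Defs.v *)
From HB Require Import structures.
From mathcomp Require Import all_boot all_order all_algebra.
From mathcomp Require Import mpoly.
Set Implicit Arguments. Unset Strict Implicit. Unset Printing Implicit Defensive.
Import Order.TTheory GRing.Theory Num.Theory.
Local Open Scope ring_scope.

Section Rep.
Variables (C : numClosedFieldType) (n : nat).
Notation P := {mpoly C[n]}.

(* index of coordinate z_k (k : 'I_n) inside 'I_(n+1): paper's index k+1 *)
Definition sh (k : 'I_n) : 'I_n.+1 := lift ord0 k.

Definition euler (f : P) : P := \sum_(j < n) 'X_j * mderiv j f.

Definition opH (c : C) (k : 'I_n) (f : P) : P :=
  c *: f - 'X_k * mderiv k f - euler f.
Definition opE1 (c : C) (k : 'I_n) (f : P) : P :=
  - (c *: ('X_k * f)) + 'X_k * euler f.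
Definition opE2 (k : 'I_n) (f : P) : P := - mderiv k f.
Definition opEij (i j : 'I_n) (f : P) : P := - ('X_j * mderiv i f).

(* sl(n+1): traceless (n+1)x(n+1) matrices; index 0 is the paper's index 1 *)
Definition in_sl (X : 'M[C]_n.+1) : Prop := \tr X = 0.

(* linear extension of the formulas: X = sum_k X_{k+1,k+1} H_k + sum_{i<>j} X_ij E_ij
   (valid for traceless X) *)
Definition rep (c : C) (X : 'M[C]_n.+1) (f : P) : P :=
  \sum_(k < n) X (sh k) (sh k) *: opH c k f
  + \sum_(k < n) X ord0 (sh k) *: opE1 c k f
  + \sum_(k < n) X (sh k) ord0 *: opE2 k f
  + \sum_(i < n) \sum_(j < n | i != j) X (sh i) (sh j) *: opEij i j f.

Definition m_of (a : C) : C := - ((a + n.+1%:R) / 2%:R).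

Definition rho (a : C) (X : 'M[C]_n.+1) (f : P) : P := rep (m_of a) X f.

Definition dpi (m : nat) (X : 'M[C]_n.+1) (f : P) : P := rep m%:R X f.

(* P_m : polynomials of total degree <= m *)
Definition Pm (m : nat) (f : P) : Prop := (msize f <= m.+1)%N.

Definition subspace (Q : P -> Prop) : Prop :=
  Q 0 /\ forall (c : C) (f g : P), Q f -> Q g -> Q (c *: f + g).

Definition findim (Q : P -> Prop) : Prop :=
  exists s : seq P, forall f, Q f ->
    exists coef : 'I_(size s) -> C, f = \sum_(i < size s) coef i *: s`_i.
End Rep.

(* Main.v *)
Require Import Defs.
From HB Require Import structures.
From mathcomp Require Import all_boot all_order all_algebra.
From mathcomp Require Import mpoly.
Import Order.TTheory GRing.Theory Num.Theory.
Local Open Scope ring_scope.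

Lemma coefXk (C : numClosedFieldType) (n : nat) (k : 'I_n) (h : {mpoly C[n]}) (g : 'X_{1..n}) :
  ('X_k * h)@_g = if (g k == 0)%N then 0 else h@_(g - U_(k)).
Proof.
case: eqP => Hk.
  apply: memN_msupp_eq0; apply/negP; rewrite mulrC (perm_mem (msuppMX _ _)).
  case/mapP => m' _ Eg; move: Hk; rewrite Eg mnmDE mnm1E eqxx; by [].
have E : g = (U_(k) + (g - U_(k)))%MM.
  by rewrite addmC submK // lep1mP; apply/eqP.
by rewrite mulrC {1}E mcoeffMX.
Qed.

Lemma coefXk2 (C : numClosedFieldType) (n : nat) (k : 'I_n) (h : {mpoly C[n]}) (g : 'X_{1..n}) :
  ('X_k * h)@_(U_(k) + g) = h@_g.
Proof. by rewrite mulrC mcoeffMX. Qed.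

Lemma coef_euler (C : numClosedFieldType) (n : nat) (f : {mpoly C[n]}) (g : 'X_{1..n}) :
  (euler f)@_g = (mdeg g)%:R * f@_g.
Proof.
rewrite /euler raddf_sum /= mulr_natl mdegE.
rewrite (@big_morph _ _ (fun k => f@_g *+ k) 0 +%R 0%N addn) //; last by move=> x y; rewrite mulrnDr.
apply: eq_bigr => j _; rewrite coefXk; case: eqP => [->|Hj] //.
rewrite mcoeff_mderiv submK ?lep1mP; last by apply/eqP.
by rewrite mnmBE mnm1E eqxx subn1 prednK // lt0n; apply/eqP.
Qed.
Lemma opE1E (C : numClosedFieldType) (n : nat) c k (f : {mpoly C[n]}) :
  opE1 c k f = 'X_k * (euler f - c *: f).
Proof. by rewrite /opE1 mulrBr addrC scalerAr. Qed.

Lemma euler_X (C : numClosedFieldType) (n : nat) (b : 'X_{1..n}) :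
  euler ('X_[b] : {mpoly C[n]}) = (mdeg b)%:R *: 'X_[b].
Proof.
apply/mpolyP => g; rewrite mcoeffZ mcoeffX.
by rewrite coef_euler mcoeffX; case: eqP => [->|_]; rewrite ?mulr0 ?mulr1.
Qed.

Lemma sh_neq0 n (k : 'I_n) : (sh k == ord0) = false.
Proof. by apply/negbTE; rewrite /sh eq_sym neq_lift. Qed.

Lemma sh_eq n (i k : 'I_n) : (sh i == sh k) = (i == k).
Proof. by rewrite /sh (inj_eq (@lift_inj _ ord0)). Qed.

Lemma sl_delta (C : numClosedFieldType) n (i j : 'I_n.+1) : i != j ->
  in_sl (delta_mx i j : 'M[C]_n.+1).
Proof.
move=> Hij; rewrite /in_sl /mxtrace big1 // => l _; rewrite mxE.
by case: (l =P i) => [->|] //=; rewrite (negbTE Hij).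
Qed.

Lemma rep_E1 (C : numClosedFieldType) n c (k : 'I_n) (f : {mpoly C[n]}) :
  rep c (delta_mx ord0 (sh k)) f = opE1 c k f.
Proof.
rewrite /rep.
rewrite [X in X + _ + _ + _]big1 ?add0r; last by move=> i _; rewrite mxE sh_neq0 scale0r.
rewrite (bigD1 k) //= mxE !eqxx scale1r big1 ?addr0; last first.
  by move=> i Hi; rewrite mxE eqxx sh_eq (negbTE Hi) scale0r.
rewrite big1 ?addr0; last by move=> i _; rewrite mxE sh_neq0 scale0r.
rewrite big1 ?addr0 //; move=> i _; rewrite big1 // => j _.
by rewrite mxE sh_neq0 scale0r.
Qed.

Lemma rep_E2 (C : numClosedFieldType) n c (k : 'I_n) (f : {mpoly C[n]}) :
  rep c (delta_mx (sh k) ord0) f = opE2 k f.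
Proof.
rewrite /rep.
rewrite [X in X + _ + _ + _]big1 ?add0r; last by move=> i _; rewrite mxE sh_neq0 andbF scale0r.
rewrite big1 ?add0r; last by move=> i _; rewrite mxE sh_neq0 scale0r.
rewrite (bigD1 k) //= mxE !eqxx scale1r big1 ?addr0; last first.
  by move=> i Hi; rewrite mxE eqxx sh_eq (negbTE Hi) scale0r.
rewrite big1 ?addr0 //; move=> i _; rewrite big1 // => j _.
by rewrite mxE sh_neq0 andbF scale0r.
Qed.

Lemma findim_bound {C : numClosedFieldType} {n} (Q : {mpoly C[n]} -> Prop) :
  findim Q -> exists B, forall f, Q f -> forall g, (B <= mdeg g)%N -> f@_g = 0.
Proof.
case=> s Hs; exists (\max_(i < size s) msize s`_i) => f Qf g Hg.
case: (Hs f Qf) => coef ->; rewrite raddf_sum big1 // => i _.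
rewrite -[LHS]/(mcoeff g (coef i *: s`_i)) mcoeffZ memN_msupp_eq0 ?mulr0 //; apply: msize_mdeg_ge.
apply: leq_trans Hg; exact: (@leq_bigmax _ (fun i : 'I_(size s) => msize s`_i) i).
Qed.

Lemma nz_comp n (b : 'X_{1..n}) : b != 0%MM -> exists k, b k != 0%N.
Proof.
move=> Hb; case: (pickP (fun k => b k != 0%N)) => [k Hk|H0]; first by exists k.
case/negP: Hb; apply/eqP/mnmP => i; rewrite mnm0E; apply/eqP.
by move: (H0 i) => /= /negbFE.
Qed.

Theorem proposition8p3 (C : numClosedFieldType) (n : nat) (a : C)
  (Q : {mpoly C[n]} -> Prop) :
  (1 <= n)%N ->
  subspace Q -> findim Q -> (exists f, Q f /\ f != 0) ->
  (forall X : 'M[C]_n.+1, in_sl X -> forall f, Q f -> Q (rho a X f)) ->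
  exists m : nat,
    m_of n a = m%:R /\
    (forall f, Q f <-> Pm m f) /\
    (forall X : 'M[C]_n.+1, in_sl X -> forall f, Q f -> rho a X f = dpi m X f).
Proof.
move=> Hn [Q0 QS] Hfd [f0 [Qf0 nz0]] Hinv.
have Qsc c f : Q f -> Q (c *: f) by move=> Qf; have := QS c f 0 Qf Q0; rewrite addr0.
have Qadd f g : Q f -> Q g -> Q (f + g) by move=> Qf Qg; have := QS 1 f g Qf Qg; rewrite scale1r.
have QE1 k f : Q f -> Q (opE1 (m_of n a) k f).
  move=> Qf; have := Hinv _ (@sl_delta C n ord0 (sh k) _) f Qf.
  by rewrite /rho rep_E1; apply; rewrite eq_sym sh_neq0.
have QD k f : Q f -> Q (mderiv k f).
  move=> Qf; have := Hinv _ (@sl_delta C n (sh k) ord0 _) f Qf.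
  rewrite /rho rep_E2 /opE2 sh_neq0 => H; have := Qsc (-1) _ (H isT).
  by rewrite scaleN1r opprK.
have [B HB] := @findim_bound C n Q Hfd.
pose k0 : 'I_n := Ordinal Hn.
have Q1 : Q 1.
  suff: forall N g, (msize g <= N)%N -> Q g -> g != 0 -> Q 1 by move=> H; apply: (H _ f0 (leqnn _)) => //.
  elim=> [|N IH] g Hs Qg nzg.
    by move: Hs; rewrite leqn0 msize_poly_eq0 (negbTE nzg).
  case: (leqP (msize g) 1) => Hs1.
    have Eg := msize1_polyC Hs1.
    have nz : g@_0 != 0.
      by apply: contra nzg => /eqP H0; rewrite Eg H0 mpolyC0.
    have := Qsc (g@_0)^-1 _ Qg; rewrite {2}Eg -mul_mpolyC -mpolyCM mulVf // mpolyC1.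
  have Hdeg := mlead_deg nzg.
  have Hsupp : g@_(mlead g) != 0 by rewrite mleadc_eq0.
  have [k Hk] : exists k, mlead g k != 0%N.
    apply: nz_comp; apply/negP => /eqP H0; move: Hs1; rewrite -Hdeg H0 mdeg0.
    done.
  apply: (IH (mderiv k g)); last first.
  - apply/negP => /eqP H; have := mcoeff_mderiv k g (mlead g - U_(k)).
    rewrite H mcoeff0 submK ?lep1mP // mnmBE mnm1E eqxx subn1 prednK ?lt0n //.
    by move=> /esym/eqP; rewrite mulrn_eq0 (negbTE Hk) (negbTE Hsupp).
  - exact: QD.
  rewrite msizeE; apply/bigmax_leqP_seq => m Hm _.
  rewrite mcoeff_msupp mcoeff_mderiv in Hm.
  have Hm' : (m + U_(k))%MM \in msupp g.
    by rewrite mcoeff_msupp; apply: contra Hm => /eqP ->; rewrite mul0rn.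
  have := msize_mdeg_lt Hm'; rewrite mdegD mdeg1 addn1 => H.
  exact: leq_trans H Hs.
have [m Hm] : exists m : nat, m_of n a = m%:R.
  case: (boolP [exists m : 'I_B.+1, m_of n a == (m : nat)%:R]) => [/existsP [m /eqP Hm]|Hno].
    by exists m.
  exfalso.
  have grow d : (d <= B)%N -> exists g γ, [/\ Q g, mdeg γ = d & g@_γ != 0].
    elim: d => [_|d IH Hd].
      exists 1, 0%MM; split => //; first by rewrite mdeg0.
      by rewrite mcoeff1 eqxx oner_neq0.
    have [g [γ [Qg Hγ Hc]]] := IH (ltnW Hd).
    exists (opE1 (m_of n a) k0 g), (U_(k0) + γ)%MM; split.
    - exact: QE1.
    - by rewrite mdegD mdeg1 Hγ.
    rewrite opE1E coefXk2 mcoeffB mcoeffZ coef_euler -mulrBl mulf_neq0 // subr_eq0 Hγ.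
    apply/negP => /eqP E; move/existsP: Hno; apply.
    by exists (Ordinal (ltnW Hd : (d < B.+1)%N)); rewrite /= E.
  have [g [γ [Qg Hγ Hc]]] := grow B (leqnn B).
  by move: Hc; rewrite (HB g Qg γ) ?Hγ ?eqxx.
exists m; split; first exact: Hm.
split; last by move=> X _ f _; rewrite /rho /dpi Hm.
move=> f; split.
  move=> Qf; rewrite /Pm; case: leqP => // Hlt; exfalso.
  have nzf : f != 0 by apply: contraTneq Hlt => ->; rewrite msize0.
  have Hd := mlead_deg nzf.
  have Hm0 : (m < mdeg (mlead f))%N by rewrite -ltnS Hd.
  have grow j : exists g γ, [/\ Q g, mdeg γ = (mdeg (mlead f) + j)%N & g@_γ != 0].
    elim: j => [|j [g [γ [Qg Hγ Hc]]]].
      by exists f, (mlead f); rewrite addn0 mleadc_eq0.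
    exists (opE1 (m_of n a) k0 g), (U_(k0) + γ)%MM; split.
    - exact: QE1.
    - by rewrite mdegD mdeg1 Hγ add1n addnS.
    rewrite opE1E coefXk2 mcoeffB mcoeffZ coef_euler -mulrBl mulf_neq0 // subr_eq0 Hγ Hm.
    by rewrite eqr_nat neq_ltn (leq_trans Hm0 (leq_addr _ _)) orbT.
  have [g [γ [Qg Hγ Hc]]] := grow B.
  by move: Hc; rewrite (HB g Qg γ) ?eqxx // Hγ leq_addl.
have QX d : forall b : 'X_{1..n}, mdeg b = d -> (d <= m)%N -> Q 'X_[b].
  elim: d => [|d IH] b Hb Hdm.
    by move/eqP: Hb; rewrite mdeg_eq0 => /eqP ->; rewrite mpolyX0.
  have [k Hk] : exists k, b k != 0%N.
    by apply: nz_comp; apply/negP => /eqP H0; move: Hb; rewrite H0 mdeg0.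
  pose β := (b - U_(k))%MM.
  have Eb : b = (U_(k) + β)%MM by rewrite addmC submK // lep1mP.
  have Hβ : mdeg β = d by move: Hb; rewrite Eb mdegD mdeg1 add1n => -[].
  have Qβ := IH β Hβ (ltnW Hdm).
  have := QE1 k _ Qβ; rewrite opE1E euler_X -scalerBl -scalerAr -mpolyXD -Eb Hm Hβ => H.
  have nz : (d%:R - m%:R : C) != 0 by rewrite subr_eq0 eqr_nat neq_ltn Hdm.
  by have := Qsc (d%:R - m%:R)^-1 _ H; rewrite scalerA mulVf // scale1r.
move=> Hf; rewrite (mpolyE f) big_seq; apply: big_ind => //.
move=> γ Hγ; apply: Qsc; apply: (QX (mdeg γ)) => //.
by rewrite -ltnS (leq_trans (msize_mdeg_lt Hγ) Hf).
Qed.
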